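(* Let $R$ be a finite group and let $\varphi$ be an automorphism of $R$ with $|R:C_R(\varphi)|=2$. Then one of the following holds: (1) $\frac14\left(|R|+|\mathbf{I}(R)|+|C_R(\varphi)|+|C_R(\varphi)^{-1}|\right)\le \mathbf{c}(R)-\frac{|R|}{32}$; (2) $A:=C_R(\varphi)$ is abelian of exponent greater than $2$, and there is $x\in R\setminus A$ with $x^2$ an involution of $A$ and $xax^{-1}=a^{-1}$ for all $a\in A$ (so $R=\langle A,x\rangle\cong \mathrm{Dic}(A,x^2,x)$ is generalized dicyclic over $A$), and $\varphi=\bar\iota_A$; (3) $R$ is abelian of exponent greater than $2$ and $\varphi=\iota$.
   Context: $\mathbf{I}(R)=\{x\in R\mid x^2=1\}$, $\mathbf{c}(R)=(|R|+|\mathbf{I}(R)|)/2$. For an automorphism $\varphi$: $C_R(\varphi)=\{x\in R\mid x^\varphi=x\}$ and $C_R(\varphi)^{-1}=\{x\in R\mid x^\varphi=x^{-1}\}$. $\iota:R\to R$ is the map $x\mapsto x^{-1}$. Generalized dicyclic: for $A$ abelian of even order and exponent $>2$ and $y$ an involution of $A$, $\mathrm{Dic}(A,y,x)=\langle A,x\mid x^2=y,\ x^{-1}ax=a^{-1}\ \forall a\in A\rangle$. For such a group, $\bar\iota_A$ is the automorphism with $a^{\bar\iota_A}=a$ and $(ax)^{\bar\iota_A}=ax^{-1}$ for all $a\in A$. *)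

(* Defs.v *)
From HB Require Import structures.
From mathcomp Require Import all_boot all_order all_algebra all_fingroup all_solvable.
Set Implicit Arguments. Unset Strict Implicit. Unset Printing Implicit Defensive.
Import GRing.Theory Num.Theory.

Definition invols (gT : finGroupType) (R : {set gT}) : {set gT} :=
  [set x in R | (x ^+ 2 == 1)%g].

Definition cR (gT : finGroupType) (R : {set gT}) : rat :=
  ((#|R| + #|invols R|)%:R / 2)%R.

Definition centA (gT : finGroupType) (R : {set gT}) (phi : {perm gT}) : {set gT} :=
  [set x in R | phi x == x].

Definition centAinv (gT : finGroupType) (R : {set gT}) (phi : {perm gT}) : {set gT} :=
  [set x in R | phi x == (x^-1)%g].

(* Main.v *)
From HB Require Import structures.
From mathcomp Require Import all_boot all_order all_algebra all_fingroup all_solvable.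
From mathcomp Require Import zify lra.
Require Import Defs.
Import GRing.Theory Num.Theory.

Section Helpers.
Local Open Scope group_scope.
Variable gT : finGroupType.

Lemma half_eq (G H : {group gT}) : H \subset G -> (#|G| < 2 * #|H|)%N -> H :=: G.
Proof.
move=> sHG lt; apply: index1g => //.
have L := Lagrange sHG; have P := indexg_gt0 G H.
have [->|] := eqVneq #|G : H| 1%N => // ne.
have : (2 <= #|G : H|)%N by lia.
move=> le2; have : (#|H| * 2 <= #|H| * #|G : H|)%N by rewrite leq_mul2l le2 orbT.
rewrite L mulnC => h; by rewrite ltnNge h in lt.
Qed.

Lemma index2_mem (G H : {group gT}) x y : H \subset G -> #|G : H| = 2 ->
  x \in G -> y \in G -> x \notin H -> y \notin H -> x^-1 * y \in H.
Proof.
move=> sHG i2 xG yG xH yH.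
have L := Lagrange sHG.
have dis : H :&: x *: H = set0.
  apply/setP=> u; rewrite !inE mem_lcoset; apply/negbTE/negP=> /andP[uH xuH].
  case/negP: xH; have -> : x = u * (x^-1 * u)^-1 by rewrite invMg invgK mulKVg.
  by rewrite groupM ?groupV.
have sub : H :|: x *: H \subset G.
  apply/subsetP=> u; rewrite inE mem_lcoset => /orP[/(subsetP sHG)//|xu].
  have -> : u = x * (x^-1 * u) by rewrite mulKVg.
  by rewrite groupM // (subsetP sHG).
have cU := cardsUI H (x *: H); rewrite dis cards0 card_lcoset in cU.
have eqG : H :|: x *: H = G.
  apply/eqP; rewrite eqEcard sub /= -L i2; rewrite addn0 in cU; by rewrite cU muln2 -addnn.
by move: yG; rewrite -eqG inE mem_lcoset (negbTE yH).
Qed.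
Lemma three_quarter (A : {group gT}) (x : gT) :
  (3 * #|A| < 4 * #|[set a in A | (a ^ x == a^-1)%g]|)%N ->
  abelian A /\ {in A, forall a, a ^ x = a^-1}.
Proof.
set T := [set a in A | a ^ x == a^-1] => big.
have sTA : T \subset A by apply/subsetP=> a; rewrite inE => /andP[].
have cT : forall g, g \in T -> 'C_A[g] :=: A.
  move=> g gT'; apply: half_eq; first exact: subsetIl.
  move: (gT'); rewrite inE => /andP[gA /eqP gx].
  set S := T :&: (g^-1 *: T).
  have sSC : S \subset 'C_A[g].
    apply/subsetP=> h; rewrite /S in_setI mem_lcoset invgK.
    case/andP=> hT ghT.
    move: hT; rewrite inE => /andP[hA /eqP hx].
    move: ghT; rewrite inE => /andP[ghA /eqP ghx].
    rewrite in_setI hA /= cent1E; apply/eqP.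
    move: ghx; rewrite conjMg gx hx invMg => e.
    by apply: invg_inj; rewrite !invMg e.
  have sU : T :|: g^-1 *: T \subset A.
    apply/subsetP=> u; rewrite in_setU mem_lcoset invgK => /orP[/(subsetP sTA)//|].
    move=> /(subsetP sTA) guA.
    have -> : u = g^-1 * (g * u) by rewrite mulKg.
    by rewrite groupM ?groupV.
  have cU := cardsUI T (g^-1 *: T); rewrite card_lcoset in cU.
  have l1 := subset_leq_card sU; have l2 := subset_leq_card sSC.
  rewrite -/S in cU.
  move: big l1 l2 cU.
  set a := #|A|; set t := #|T|; set s := #|S|; set c := #|'C_A[g]|; set u := #|T :|: _|.
  lia.
have sTZ : T \subset 'Z(A).
  apply/subsetP=> g gT'; rewrite inE (subsetP sTA) //=.
  apply/centP=> a aA; move: aA; rewrite -(cT g gT') inE cent1E => /andP[_ /eqP e].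
  by rewrite /commute e.
have abA : abelian A.
  apply/center_idP; apply: half_eq; first exact: center_sub.
  have := subset_leq_card sTZ; move: big.
  set a := #|A|; set t := #|T|; set z := #|'Z(A)|; lia.
split=> //.
have gT' : group_set T.
  apply/group_setP; split; first by rewrite inE group1 conj1g invg1 eqxx.
  move=> g h; rewrite !inE => /andP[gA /eqP gx] /andP[hA /eqP hx].
  rewrite groupM //= conjMg gx hx invMg.
  by apply/eqP; apply: invg_inj; rewrite !invMg !invgK ((centsP abA) g gA h hA).
have eTA : Group gT' :=: A.
  apply: half_eq => //=; move: big; rewrite /=.
  set a := #|A|; set t := #|T|; lia.
by move=> a aA; move: aA; rewrite -eTA /= inE => /andP[_ /eqP].
Qed.
End Helpers.

Local Open Scope group_scope.
Theorem lemma2p2 (gT : finGroupType) (R : {group gT}) (phi : {perm gT}) :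
  phi \in Aut R ->
  (#|R : centA R phi|)%g = 2%N ->
  [\/ ((#|R| + #|invols R| + #|centA R phi| + #|centAinv R phi|)%:R / 4
        <= cR R - #|R|%:R / 32 :> rat)%R,
      [/\ abelian (centA R phi), (2 < exponent (centA R phi))%N &
        exists2 x, x \in R :\: centA R phi &
          [/\ (x ^+ 2 \in centA R phi)%g, (x ^+ 2 != 1)%g, ((x ^+ 2) ^+ 2 == 1)%g,
              (forall a, a \in centA R phi -> x * a * x^-1 = a^-1)%g &
              (forall a, a \in centA R phi -> phi (a * x)%g = (a * x^-1)%g)]]
    | [/\ abelian R, (2 < exponent R)%N & forall r, r \in R -> phi r = (r^-1)%g]].
Proof.
move=> autphi i2.
have mphi := morphicP (Aut_morphic autphi).
have phi1 : phi 1%g = 1%g.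
  have := mphi 1%g 1%g (group1 R) (group1 R); rewrite mulg1 => e.
  by apply: (mulgI (phi 1%g)); rewrite -e mulg1.
have gA : group_set (centA R phi).
  apply/group_setP; split; first by rewrite inE group1 phi1 eqxx.
  move=> x y; rewrite !inE => /andP[xR /eqP px] /andP[yR /eqP py].
  by rewrite groupM // mphi // px py eqxx.
pose A : {group gT} := Group gA.
have -> : centA R phi = A by [].
have sAR : A \subset R by apply/subsetP=> u; rewrite inE => /andP[].
have phiA : forall a, a \in A -> phi a = a by move=> a; rewrite inE => /andP[_ /eqP].
have LA := Lagrange sAR; rewrite i2 in LA.
set B := centAinv R phi; set I := invols R.
have [small|large] := leqP (8 * #|A| + 8 * #|B| + #|R|) (8 * #|R| + 8 * #|I|).
  apply: Or31; rewrite /cR.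
  move: small; rewrite -(ler_nat rat) !natrD => h.
  set n := (#|R|%:R : rat) in h *; set i := (#|I|%:R : rat) in h *.
  set a := (#|A|%:R : rat) in h *; set b := (#|B|%:R : rat) in h *.
  lra.
have cB := cardsID A B; have cI := cardsID A I; have cRA := cardsID A R.
have sBI : B :&: A \subset I :&: A.
  apply/subsetP=> u; rewrite !inE => /andP[/andP[uR /eqP pu] /andP[_ /eqP pa]].
  by rewrite uR /= expg2 -eq_invg_mul -pu pa eqxx.
have lBI := subset_leq_card sBI.
have eRA : R :&: A = A by apply/setIidPr.
rewrite eRA in cRA.
have sBR : B :\: A \subset R :\: A.
  by apply/subsetP=> u; rewrite !inE => /andP[-> /andP[-> _]].
have lBR := subset_leq_card sBR.
have bigB : (6 * #|A| + 8 * #|I :\: A| < 8 * #|B :\: A|)%N.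
  move: large cB cI cRA LA lBI.
  set a := #|A|; set b := #|B|; set i := #|I|; set r := #|R|.
  set b1 := #|B :&: A|; set b2 := #|B :\: A|; set i1 := #|I :&: A|; set i2' := #|I :\: A|.
  set r2 := #|R :\: A|. lia.
have [x0 x0B] : exists x0, x0 \in B :\: A.
  apply/set0Pn; apply/eqP => e; rewrite e cards0 in bigB; lia.
move: (x0B); rewrite !inE => /andP[x0A /andP[x0R /eqP px0]].
have x0A' : x0 \notin A by rewrite inE.
have key : forall a, a \in A -> (phi (x0 * a) == (x0 * a)^-1) = (a ^ x0 == a^-1).
  move=> a aA; have aR := subsetP sAR a aA.
  rewrite mphi // px0 phiA // conjgE invMg.
  by rewrite mulgA -(inj_eq (mulIg x0)) mulgKV.
set T := [set a in A | a ^ x0 == a^-1].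
have eT : x0 *: T = B :\: A.
  apply/setP=> y; rewrite mem_lcoset [in RHS]inE [y \in B]inE.
  have [yA|yA] := boolP (y \in A).
    rewrite /= inE; apply/negbTE/negP => /andP[ya _]; case/negP: x0A'.
    have -> : x0 = y * (x0^-1 * y)^-1 by rewrite invMg invgK mulKVg.
    by rewrite groupM ?groupV.
  rewrite /=; have [yR|yR] := boolP (y \in R); last first.
    rewrite inE; apply/negbTE/negP => /andP[ya _]; case/negP: yR.
    have -> : y = x0 * (x0^-1 * y) by rewrite mulKVg.
    by rewrite groupM // (subsetP sAR).
  have ya := @index2_mem _ R A x0 y sAR i2 x0R yR x0A' yA.
  by rewrite inE ya /= -key // mulKVg.
have cT : #|T| = #|B :\: A| by rewrite -eT card_lcoset.
have [abA inv] : abelian A /\ {in A, forall a, a ^ x0 = a^-1}.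
  apply: three_quarter; rewrite -/T cT; lia.
have ax : forall a, a \in A -> a * x0 = x0 * a^-1.
  move=> a aA; have := inv a aA; rewrite conjgE => e.
  by rewrite -e mulKVg.
have allB : forall y, y \in R -> y \notin A -> phi y = y^-1.
  move=> y yR yA; have ya := @index2_mem _ R A x0 y sAR i2 x0R yR x0A' yA.
  have := key _ ya; rewrite mulKVg inv // eqxx => /eqP //.
have zA : x0 ^+ 2 \in A.
  apply/negPn/negP => zA.
  have := @index2_mem _ R A x0 (x0 ^+ 2) sAR i2 x0R (groupX 2 x0R) x0A' zA.
  by rewrite expg2 mulKg (negbTE x0A').
have pz : phi (x0 ^+ 2) = x0^-1 * x0^-1 by rewrite expg2 mphi // px0.
have z2 : (x0 ^+ 2) ^+ 2 = 1.
  rewrite {1}expg2 -{1}(phiA _ zA) pz expg2 mulgA mulgKV mulVg //.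
have z1 : x0 ^+ 2 != 1.
  apply/eqP => z1.
  have sRI : R :\: A \subset I :\: A.
    apply/subsetP=> y; rewrite !in_setD => /andP[yA yR]; rewrite yA /= inE yR /=.
    have ya := @index2_mem _ R A x0 y sAR i2 x0R yR x0A' yA.
    have -> : y = x0 * (x0^-1 * y) by rewrite mulKVg.
    move: (x0^-1 * y) ya => a aA.
    by rewrite expg2 mulgA -(mulgA x0 a x0) ax // mulgA mulgKV -expg2 z1.
  have := subset_leq_card sRI; move: bigB lBR LA cRA.
  set a := #|A|; set r := #|R|; set b2 := #|B :\: A|; set i2' := #|I :\: A|.
  set r2 := #|R :\: A|. lia.
have [e3|e3] := leqP 3 (exponent A).
  apply: Or32; split => //; exists x0; first by rewrite in_setD x0A' x0R.
  split => //; [by apply/eqP | move=> a aA | move=> a aA].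
    have e := ax _ (groupVr aA); rewrite invgK in e.
    by rewrite -e mulgK.
  have aR := subsetP sAR a aA.
  by rewrite mphi // phiA // px0.
have a2 : forall a, a \in A -> a ^+ 2 = 1.
  move=> a aA; have := expg_exponent aA.
  have : exponent A = 1%N \/ exponent A = 2%N.
    move: e3 (exponent_gt0 A); case: (exponent A) => [|[|[|n]]] //; by [left | right].
  by case=> ->; [rewrite expg1 => ->; rewrite expg1n | ].
have ainv : forall a, a \in A -> a^-1 = a.
  by move=> a aA; apply/eqP; rewrite eq_invg_mul -expg2 a2.
have dec : forall u, u \in R -> u \in A \/ (x0^-1 * u \in A).
  move=> u uR; have [uA|uA] := boolP (u \in A); [by left | right].
  exact: (@index2_mem _ R A x0 u sAR i2 x0R uR x0A' uA).
have cxa : forall a, a \in A -> commute x0 a.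
  by move=> a aA; rewrite /commute -{1}(ainv a aA) -ax.
have cAA : forall a b, a \in A -> b \in A -> commute a b.
  by move=> a b aA bA; apply: (centsP abA).
have cx : forall u, u \in R -> commute x0 u.
  move=> u uR; case: (dec u uR) => [uA|ua]; first exact: cxa.
  rewrite -(mulKVg x0 u); apply: commuteM; [exact: commute_refl | exact: cxa].
have ca : forall a u, a \in A -> u \in R -> commute a u.
  move=> a u aA uR; case: (dec u uR) => [uA|ua]; first exact: cAA.
  rewrite -(mulKVg x0 u); apply: commuteM; [apply: commute_sym; exact: cxa | exact: cAA].
apply: Or33; split.
- apply/centsP=> u uR w wR.
  case: (dec u uR) => [uA|ua]; first exact: ca.
  rewrite -(mulKVg x0 u); apply: commute_sym; apply: commuteM.
    by apply: commute_sym; apply: cx.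
  by apply: commute_sym; apply: ca.
- rewrite ltnNge; apply/negP => le2.
  have := expg_exponent x0R.
  have : exponent R = 1%N \/ exponent R = 2%N.
    move: le2 (exponent_gt0 R); case: (exponent R) => [|[|[|n]]] //; by [left | right].
  case=> [->|->]; last by move=> e; rewrite e eqxx in z1.
  rewrite expg1 => e; case/negP: x0A'; rewrite e; exact: group1.
- move=> r rR; have [rA|rA] := boolP (r \in A); last exact: allB.
  by rewrite phiA // ainv.
Qed.
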